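(* Let $N$ be a graded ideal of a Lie superalgebra $L$. Then $N\subseteq Z^{\wedge}(L)$ if and only if the natural map $L\wedge L\to (L/N)\wedge(L/N)$, $x\wedge y\mapsto (x+N)\wedge(y+N)$, is a monomorphism.
   Context: All algebras are over a field $\mathbb{F}$ of characteristic $\neq 2,3$. Non-abelian tensor square: $L\otimes L$ is the Lie superalgebra generated by symbols $x\otimes y$ ($x,y$ homogeneous, $|x\otimes y|=|x|+|y|$) subject to bilinearity, $[x,x']\otimes y=x\otimes[x',y]-(-1)^{|x||x'|}x'\otimes[x,y]$, $x\otimes[y,y']=(-1)^{|y'|(|x|+|y|)}[y',x]\otimes y-(-1)^{|x||y|}[y,x]\otimes y'$, and $[x\otimes y,x'\otimes y']=-(-1)^{|x||y|}[y,x]\otimes[x',y']$. The exterior square is $L\wedge L=(L\otimes L)/(L\square L)$, where $L\square L$ is the graded ideal generated by $x\otimes y+(-1)^{|x||y|}y\otimes x$ for homogeneous $x,y$ and by $x_0\otimes x_0$ for $x_0\in L_{\bar 0}$; the image of $x\otimes y$ is written $x\wedge y$. The exterior center is $Z^{\wedge}(L)=\{x\in L: x\wedge y=0 \text{ for all } y\in L\}$. *)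

(* Defs.v *)
From HB Require Import structures.
From mathcomp Require Import all_boot all_order all_algebra.
Set Implicit Arguments. Unset Strict Implicit. Unset Printing Implicit Defensive.
Import GRing.Theory.
Local Open Scope ring_scope.

(* (-1)^(a b) for degrees a b in Z/2 = bool *)
Definition sgn (F : pzRingType) (a b : bool) : F := if a && b then -1 else 1.

Section Defs.
Variable F : fieldType.

Definition homog (V : lmodType F) (V0 V1 : V -> Prop) (b : bool) (x : V) : Prop :=
  if b then V1 x else V0 x.

Definition subspace (V : lmodType F) (S : V -> Prop) : Prop :=
  S 0 /\ forall (a : F) (x y : V), S x -> S y -> S (a *: x + y).

Definition is_lie_super (V : lmodType F) (V0 V1 : V -> Prop) (br : V -> V -> V) : Prop :=
  subspace V0 /\ subspace V1 /\
  (forall x, exists x0 x1, V0 x0 /\ V1 x1 /\ x = x0 + x1) /\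
  (forall x, V0 x -> V1 x -> x = 0) /\
  (forall (a : F) x y z, br (a *: x + y) z = a *: br x z + br y z) /\
  (forall (a : F) x y z, br z (a *: x + y) = a *: br z x + br z y) /\
  (forall a b x y, homog V0 V1 a x -> homog V0 V1 b y -> homog V0 V1 (a (+) b) (br x y)) /\
  (forall a b x y, homog V0 V1 a x -> homog V0 V1 b y -> br x y = - (sgn F a b *: br y x)) /\
  (forall a b c x y z, homog V0 V1 a x -> homog V0 V1 b y -> homog V0 V1 c z ->
      sgn F a c *: br x (br y z) + sgn F b a *: br y (br z x)
      + sgn F c b *: br z (br x y) = 0).

Record LieSuper := MkLieSuper {
  LS_V :> lmodType F;
  LS_ev : LS_V -> Prop;
  LS_od : LS_V -> Prop;
  LS_br : LS_V -> LS_V -> LS_V;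
  LS_ax : is_lie_super LS_ev LS_od LS_br
}.

Definition hmg (L : LieSuper) (b : bool) (x : L) : Prop := homog (@LS_ev L) (@LS_od L) b x.

Definition lie_hom (L M : LieSuper) (f : L -> M) : Prop :=
  [/\ (forall (a : F) (x y : L), f (a *: x + y) = a *: f x + f y),
      (forall x y, f (LS_br x y) = LS_br (f x) (f y))
    & (forall b x, hmg b x -> hmg b (f x))].

Definition graded_ideal (L : LieSuper) (N : L -> Prop) : Prop :=
  [/\ subspace N,
      (forall x, N x -> exists x0 x1,
          [/\ N x0, @LS_ev L x0, N x1, @LS_od L x1 & x = x0 + x1]),
      (forall x y, N y -> N (LS_br x y))
    & (forall x y, N x -> N (LS_br x y))].

(* A bilinear map f : L x L -> M satisfying the defining relations of the
   non-abelian tensor square together with those of L [] L, i.e. a map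
   factoring through L /\ L. *)
Definition ext_pairing (L M : LieSuper) (f : L -> L -> M) : Prop :=
  (forall (a : F) x y z, f (a *: x + y) z = a *: f x z + f y z) /\
  (forall (a : F) x y z, f z (a *: x + y) = a *: f z x + f z y) /\
  (forall a b x y, hmg a x -> hmg b y -> hmg (a (+) b) (f x y)) /\
  (forall a a' b x x' y, hmg a x -> hmg a' x' -> hmg b y ->
     f (LS_br x x') y = f x (LS_br x' y) - sgn F a a' *: f x' (LS_br x y)) /\
  (forall a b b' x y y', hmg a x -> hmg b y -> hmg b' y' ->
     f x (LS_br y y') = sgn F b' (a (+) b) *: f (LS_br y' x) y
                        - sgn F a b *: f (LS_br y x) y') /\
  (forall a b a' b' x y x' y', hmg a x -> hmg b y -> hmg a' x' -> hmg b' y' ->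
     LS_br (f x y) (f x' y') = - (sgn F a b *: f (LS_br y x) (LS_br x' y'))) /\
  (forall a b x y, hmg a x -> hmg b y -> f x y + sgn F a b *: f y x = 0) /\
  (forall x, @LS_ev L x -> f x x = 0).

(* (W, w) is the exterior square L /\ L with w x y = x /\ y :
   the universal exterior pairing (the Lie superalgebra presented by the
   generators x /\ y and the relations above). *)
Definition is_ext_square (L W : LieSuper) (w : L -> L -> W) : Prop :=
  ext_pairing w /\
  forall (M : LieSuper) (f : L -> L -> M), ext_pairing f ->
    exists h : W -> M,
      [/\ lie_hom h, (forall x y, h (w x y) = f x y)
        & forall h' : W -> M, lie_hom h' -> (forall x y, h' (w x y) = f x y) ->
            forall z, h' z = h z].

Definition ext_center (L W : LieSuper) (w : L -> L -> W) (x : L) : Prop :=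
  forall y, w x y = 0.

End Defs.

(* Main.v *)
Require Import Defs.
From HB Require Import structures.
From mathcomp Require Import all_boot all_order all_algebra.
From Stdlib Require Import ClassicalEpsilon.
Import GRing.Theory.
Local Open Scope ring_scope.

Lemma linD (F : fieldType) (V V' : lmodType F) (g : V -> V') :
  (forall a x y, g (a *: x + y) = a *: g x + g y) ->
  forall x y, g (x + y) = g x + g y.
Proof. by move=> Hg x y; rewrite -{1}[x]scale1r Hg scale1r. Qed.

Arguments linD {F V V' g}.

Lemma lin0 (F : fieldType) (V V' : lmodType F) (g : V -> V') :
  (forall a x y, g (a *: x + y) = a *: g x + g y) -> g 0 = 0.
Proof.
move=> Hg; have := Hg 1 0 0; rewrite !scale1r addr0 => E.
by apply: (addIr (g 0)); rewrite add0r -E.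
Qed.

Arguments lin0 {F V V' g}.

Lemma linN (F : fieldType) (V V' : lmodType F) (g : V -> V') :
  (forall a x y, g (a *: x + y) = a *: g x + g y) -> forall x, g (- x) = - g x.
Proof.
move=> Hg x; have := Hg (-1) x 0; rewrite !scaleN1r addr0 (lin0 Hg) addr0; done.
Qed.

Arguments linN {F V V' g}.

Theorem mainTheorem15 (F : fieldType)
  (char2 : (2%:R : F) != 0) (char3 : (3%:R : F) != 0)
  (L : LieSuper F) (N : L -> Prop) (HN : graded_ideal N)
  (Q : LieSuper F) (pi : L -> Q) (Hpi : lie_hom pi)
  (pi_surj : forall q : Q, exists x : L, pi x = q)
  (pi_ker : forall x : L, pi x = 0 <-> N x)
  (W : LieSuper F) (w : L -> L -> W) (Hw : is_ext_square w)
  (W' : LieSuper F) (w' : Q -> Q -> W') (Hw' : is_ext_square w')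
  (phi : W -> W') (Hphi : lie_hom phi)
  (Hphiw : forall x y : L, phi (w x y) = w' (pi x) (pi y)) :
  (forall x : L, N x -> ext_center w x) <-> injective phi.
Proof.
have Hpi' := Hpi.
move: Hpi' => [pilin pibr pihmg].
have piD := linD pilin.
have piN := linN pilin.
have [ext_w wuniv] := Hw.
have [ext_w' w'univ] := Hw'.
move: (ext_w) => [w1 [w2 [w3 [w4 [w5 [w6 [w7 w8]]]]]]].
split; last first.
  move=> inj n Nn y; apply: inj.
  rewrite Hphiw.
  have -> : pi n = 0 by apply/pi_ker.
  rewrite (lin0 (g := phi) (let: And3 h _ _ := Hphi in h)).
  move: ext_w' => [v1 _].
  exact: (lin0 (g := fun x => w' x (pi y)) (fun a x y' => v1 a x y' _)).
move=> Hc.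
have wDl : forall z x y, w (x + y) z = w x z + w y z.
  by move=> z; apply: (linD (g := fun x => w x z)) => a x y; apply: w1.
have wDr : forall z x y, w z (x + y) = w z x + w z y.
  by move=> z; apply: (linD (g := fun x => w z x)) => a x y; apply: w2.
have wNr : forall z x, w z (- x) = - w z x.
  by move=> z; apply: (linN (g := fun x => w z x)) => a x y; apply: w2.
have wNl : forall z x, w (- x) z = - w x z.
  by move=> z; apply: (linN (g := fun x => w x z)) => a x y; apply: w1.
move: (LS_ax L) => [_ [_ [decL _]]].
have key : forall b yb a m, hmg b yb -> hmg a m -> N m -> w yb m = 0.
  move=> b yb a m hb ha Nm; have := w7 _ _ _ _ hb ha.
  by rewrite (Hc m Nm yb) scaler0 addr0.
have wN : forall n y, N n -> w y n = 0.
  move=> n y Nn; move: HN => [_ HNd _ _].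
  have [n0 [n1 [Nn0 ev0 Nn1 od1 ->]]] := HNd n Nn.
  have [y0 [y1 [ey0 [oy1 ->]]]] := decL y.
  rewrite !wDl !wDr.
  rewrite (@key false y0 false n0) // (@key false y0 true n1) //.
  by rewrite (@key true y1 false n0) // (@key true y1 true n1) // !addr0.
have wwd : forall x x' y y', pi x = pi x' -> pi y = pi y' -> w x y = w x' y'.
  move=> x x' y y' ex ey.
  have Nx : N (x - x') by apply/pi_ker; rewrite piD piN ex subrr.
  have Ny : N (y - y') by apply/pi_ker; rewrite piD piN ey subrr.
  have -> : x = x' + (x - x') by rewrite addrC subrK.
  have -> : y = y' + (y - y') by rewrite addrC subrK.
  rewrite wDl (wDr x' y' (y - y')) (wDr (x - x') y' (y - y')) (wN _ x' Ny) (wN _ (x - x') Ny) (Hc _ Nx y') !addr0.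
  done.
pose pre q := proj1_sig (constructive_indefinite_description _ (pi_surj q)).
have preK : forall q, pi (pre q) = q.
  by move=> q; rewrite /pre; case: constructive_indefinite_description.
pose f q r := w (pre q) (pre r).
have fpi : forall x y, f (pi x) (pi y) = w x y.
  by move=> x y; apply: wwd; rewrite preK.
move: (LS_ax Q) => [qev [qod [_ [qint _]]]].
have lift : forall a q, hmg a q -> exists x, hmg a x /\ pi x = q.
  move=> a q hq; have [x ex] := pi_surj q.
  have [x0 [x1 [h0 [h1 ex']]]] := decL x.
  have e0 : hmg false (pi x0) := pihmg false x0 h0.
  have e1 : hmg true (pi x1) := pihmg true x1 h1.
  have eq : q = pi x0 + pi x1 by rewrite -ex ex' piD.
  case: a hq => hq.
  - exists x1; split => //.
    have o0 : LS_od (pi x0).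
      have := qod.2 (-1) (pi x1) q e1 hq.
      by rewrite scaleN1r eq addrC addrK.
    by rewrite eq (qint _ e0 o0) add0r.
  - exists x0; split => //.
    have o1 : LS_ev (pi x1).
      have := qev.2 (-1) (pi x0) q e0 hq.
      by rewrite scaleN1r eq addKr.
    by rewrite eq (qint _ o1 e1) addr0.
have Hf : ext_pairing f.
  split.
    move=> a q q' r.
    have [x <-] := pi_surj q; have [x' <-] := pi_surj q'; have [y <-] := pi_surj r.
    by rewrite -pilin !fpi w1.
  split.
    move=> a q q' r.
    have [x <-] := pi_surj q; have [x' <-] := pi_surj q'; have [y <-] := pi_surj r.
    by rewrite -pilin !fpi w2.
  split.
    move=> a b q r ha hb.
    have [x [hx <-]] := lift _ _ ha; have [y [hy <-]] := lift _ _ hb.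
    rewrite fpi; exact: (w3 _ _ _ _ hx hy).
  split.
    move=> a a' b q q' r ha ha' hb.
    have [x [hx <-]] := lift _ _ ha; have [x' [hx' <-]] := lift _ _ ha'.
    have [y [hy <-]] := lift _ _ hb.
    rewrite -!pibr !fpi. exact: (w4 _ _ _ _ _ _ hx hx' hy).
  split.
    move=> a b b' q r r' ha hb hb'.
    have [x [hx <-]] := lift _ _ ha; have [y [hy <-]] := lift _ _ hb.
    have [y' [hy' <-]] := lift _ _ hb'.
    rewrite -!pibr !fpi; exact: (w5 _ _ _ _ _ _ hx hy hy').
  split.
    move=> a b a' b' q r q' r' ha hb ha' hb'.
    have [x [hx <-]] := lift _ _ ha; have [y [hy <-]] := lift _ _ hb.
    have [x' [hx' <-]] := lift _ _ ha'; have [y' [hy' <-]] := lift _ _ hb'.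
    rewrite -!pibr !fpi; exact: (w6 _ _ _ _ _ _ _ _ hx hy hx' hy').
  split.
    move=> a b q r ha hb.
    have [x [hx <-]] := lift _ _ ha; have [y [hy <-]] := lift _ _ hb.
    rewrite !fpi; exact: (w7 _ _ _ _ hx hy).
  move=> q hq.
  have [x [hx <-]] := lift false q hq.
  rewrite fpi; exact: (w8 _ hx).
have [h [hhom hw _]] := w'univ _ f Hf.
have [h0 [_ _ hu0]] := wuniv _ w ext_w.
have E1 : forall z, h (phi z) = h0 z.
  apply: (hu0 (fun z => h (phi z))).
    move: hhom Hphi => [a1 a2 a3] [b1 b2 b3]; split.
    - by move=> a x y; rewrite b1 a1.
    - by move=> x y; rewrite b2 a2.
    - by move=> b x hx; apply: a3; apply: b3.
  by move=> x y; rewrite Hphiw hw fpi.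
have E2 : forall z, z = h0 z.
  apply: (hu0 (fun z => z)) => //; split => //.
move=> z1 z2 e.
by rewrite (E2 z1) (E2 z2) -!E1 e.
Qed.
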